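(* Let $\rho>0$, $\xi\in\mathbb{R}$, and $H=\frac{1}{2(1+\rho u^2)}\big(u^2(P_u^2+P_y^2)+\xi\big)$ on $(u,y)\in(0,\infty)\times\mathbb{R}$. On the level set $H=E$, $P_y=L>0$, if $2E<\xi$ and $2\rho E>L^2$, the projections to the $(u,y)$-plane of the trajectories of the Hamiltonian flow have equation $$u^2-\frac{2\rho E-L^2}{L^2}(y-y_0)^2=u_*^2,\qquad u\in(u_*,+\infty),$$ for some $y_0\in\mathbb{R}$, where $u_*=\sqrt{\frac{\xi-2E}{2\rho E-L^2}}$. *)

(* Defs.v *)
From Stdlib Require Import Reals.
From Coquelicot Require Import Coquelicot.
Open Scope R_scope.

Definition Ham (rho xi u y Pu Py : R) : R :=
  (u ^ 2 * (Pu ^ 2 + Py ^ 2) + xi) / (2 * (1 + rho * u ^ 2)).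

Definition in_interval (a b : Rbar) (t : R) : Prop :=
  Rbar_lt a t /\ Rbar_lt t b.

Definition hamiltonian_trajectory (rho xi : R) (a b : Rbar)
  (u y Pu Py : R -> R) : Prop :=
  Rbar_lt a b /\
  forall t, in_interval a b t ->
    0 < u t /\
    is_derive u t (Derive (fun p => Ham rho xi (u t) (y t) p (Py t)) (Pu t)) /\
    is_derive y t (Derive (fun p => Ham rho xi (u t) (y t) (Pu t) p) (Py t)) /\
    is_derive Pu t (- Derive (fun q => Ham rho xi q (y t) (Pu t) (Py t)) (u t)) /\
    is_derive Py t (- Derive (fun q => Ham rho xi (u t) q (Pu t) (Py t)) (y t)).

(* Main.v *)
Require Import Defs.
From Stdlib Require Import Reals Lra Psatz Classical.
From Coquelicot Require Import Coquelicot.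
Open Scope R_scope.
Lemma pos1 rho U : 0 < rho -> 0 < 1 + rho * U^2.
Proof. intros; nra. Qed.
Lemma dPu rho xi U Y PU PY : 0 < rho ->
  Derive (fun p => Ham rho xi U Y p PY) PU = U^2*PU/(1+rho*U^2).
Proof. intros H. pose proof (pos1 rho U H). apply is_derive_unique; unfold Ham.
auto_derive. lra. field. lra. Qed.
Lemma dPy rho xi U Y PU PY : 0 < rho ->
  Derive (fun p => Ham rho xi U Y PU p) PY = U^2*PY/(1+rho*U^2).
Proof. intros H. pose proof (pos1 rho U H). apply is_derive_unique; unfold Ham.
auto_derive. lra. field. lra. Qed.
Lemma dU rho xi U Y PU PY : 0 < rho ->
  Derive (fun q => Ham rho xi q Y PU PY) U = U*(PU^2+PY^2 - rho*xi)/(1+rho*U^2)^2.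
Proof. intros H. pose proof (pos1 rho U H). apply is_derive_unique; unfold Ham.
auto_derive. lra. field. lra. Qed.
Lemma interval_conv a b t1 t2 s : in_interval a b t1 -> in_interval a b t2 ->
  t1 <= s <= t2 -> in_interval a b s.
Proof. intros [H1 H2] [H3 H4] [H5 H6]; split.
- eapply Rbar_lt_le_trans; [exact H1|]; simpl; lra.
- eapply Rbar_le_lt_trans; [|exact H4]; simpl; lra. Qed.

Theorem proposition16 (rho xi E L : R) (a b : Rbar) (u y Pu Py : R -> R) :
  0 < rho -> 0 < L -> 2 * E < xi -> 2 * rho * E > L ^ 2 ->
  hamiltonian_trajectory rho xi a b u y Pu Py ->
  (forall t, in_interval a b t -> Ham rho xi (u t) (y t) (Pu t) (Py t) = E) ->
  (forall t, in_interval a b t -> Py t = L) ->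
  exists y0 : R,
    forall t, in_interval a b t ->
      (u t) ^ 2 - (2 * rho * E - L ^ 2) / L ^ 2 * (y t - y0) ^ 2
        = (sqrt ((xi - 2 * E) / (2 * rho * E - L ^ 2))) ^ 2 /\
      sqrt ((xi - 2 * E) / (2 * rho * E - L ^ 2)) <= u t.
Proof.
intros Hr HL Hm Hc [_ Htr] HE HPy.
set (c := 2 * rho * E - L ^ 2).
assert (Hcpos : 0 < c). { unfold c; lra. }
set (g := fun t => y t - L / c * (u t * Pu t)).
assert (Een : forall t, in_interval a b t ->
  (u t)^2 * (Pu t)^2 = c * (u t)^2 - (xi - 2*E)).
{ intros t Ht. pose proof (HE t Ht) as H. rewrite (HPy t Ht) in H. unfold Ham in H.
  pose proof (pos1 rho (u t) Hr).
  apply (f_equal (fun z => z * (2 * (1 + rho * u t ^ 2)))) in H.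
  field_simplify in H; [|lra]. unfold c. nra. }
assert (Hg : forall t, in_interval a b t -> is_derive g t 0).
{ intros t Ht. destruct (Htr t Ht) as (Hu & Du & Dy & DPu & _).
  rewrite dPu in Du by lra. rewrite dPy in Dy by lra. rewrite dU in DPu by lra.
  rewrite (HPy t Ht) in Dy, DPu.
  pose proof (pos1 rho (u t) Hr). pose proof (Een t Ht).
  evar (v : R).
  assert (Hd : is_derive g t v).
  { unfold g. apply (is_derive_minus y). exact Dy. apply is_derive_scal.
    apply (is_derive_mult u Pu). exact Du. exact DPu. intros; apply Rmult_comm. }
  replace 0 with v; [exact Hd|]. unfold v.
  unfold minus, plus, opp, scal, mult; simpl.
  assert (K : u t ^ 2 * Pu t ^ 2 * (rho * u t ^ 2) - u t ^ 2 * L ^ 2 + rho * xi * u t ^ 2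
     = c * u t ^ 2 * (1 + rho * u t ^ 2)).
  { rewrite H0. unfold c. ring. }
  transitivity (L / c * (c * u t ^ 2 * (1 + rho * u t ^ 2) - (u t ^ 2 * Pu t ^ 2 * (rho * u t ^ 2) - u t ^ 2 * L ^ 2 + rho * xi * u t ^ 2)) / (1 + rho * u t ^ 2) ^ 2).
  { field. split; lra. }
  rewrite K. field. split; lra. }
destruct (classic (exists t0, in_interval a b t0)) as [[t0 Ht0] | Hno].
2:{ exists 0; intros t Ht; exfalso; apply Hno; eauto. }
exists (g t0). intros t Ht.
assert (Hgt : g t = g t0).
{ destruct (Rtotal_order t t0) as [Hl|[He|Hl]].
  - apply (eq_is_derive g); [intros s Hs; apply Hg; eapply interval_conv; [exact Ht|exact Ht0|exact Hs] | exact Hl].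
  - subst; reflexivity.
  - symmetry; apply (eq_is_derive g); [intros s Hs; apply Hg; eapply interval_conv; [exact Ht0|exact Ht|exact Hs] | exact Hl]. }
assert (Hy : y t - g t0 = L / c * (u t * Pu t)).
{ rewrite <- Hgt. unfold g. ring. }
pose proof (Een t Ht) as H0. destruct (Htr t Ht) as [Hu _].
assert (Hmc : (xi - 2 * E) / c = u t ^ 2 - u t ^ 2 * Pu t ^ 2 / c).
{ rewrite H0. field. lra. }
fold c. split.
- rewrite pow2_sqrt. 2:{ apply Rlt_le, Rdiv_lt_0_compat; lra. }
  rewrite Hy, Hmc. field. split; lra.
- rewrite <- (sqrt_pow2 (u t)) by lra. apply sqrt_le_1_alt. rewrite Hmc.
  assert (0 <= u t ^ 2 * Pu t ^ 2 / c).
  { apply Rdiv_le_0_compat; [nra|lra]. }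
  lra.
Qed.
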